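(* Let $G=([n],E)$ be a finite simple loopless undirected graph and let $S_G=\mathrm{span}\{\ket{i}\!\bra{j}:\ i=j\in[n]\ \text{or}\ \{i,j\}\in E\}\subseteq M_n$. Then $\mathcal{H}(S_G)=\mathcal{H}(G)$.
   Context: All scalars are complex; $M_{n\times m}$ denotes complex $n\times m$ matrices, $M_n=M_{n\times n}$, and $\ket{i}$ is the $i$-th standard basis vector. For a linear subspace $S\subseteq M_n$, $M_m(S)$ denotes the set of $m\times m$ block matrices $B=[B_{i,j}]_{i,j\in[m]}$ with every block $B_{i,j}\in S$, viewed as elements of $M_{mn}$. A noncommutative graph is a linear subspace $S\subseteq M_n$ that contains $I_n$ and is closed under conjugate transpose. The Haemers bound of a noncommutative graph $S\subseteq M_n$ is $\mathcal{H}(S)=\min\{\mathrm{rk}(B):\ m\in\mathbb{N},\ B\in M_m(S),\ \sum_{i=1}^m B_{i,i}=I_n\}$. The Haemers bound of a graph $G=([n],E)$ (over $\mathbb{C}$) is $\mathcal{H}(G)=\min\{\mathrm{rk}(B):\ B\in M_n,\ B_{i,i}=1\ \forall i\in[n],\ B_{i,j}=0\ \text{whenever } i\neq j \text{ and } \{i,j\}\notin E\}$. *)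

(* Defs.v *)
From mathcomp Require Import all_boot all_algebra.
From mathcomp Require Import complex Rstruct.
From mathcomp Require Import boolp.
From Stdlib Require Import Reals.
Set Implicit Arguments. Unset Strict Implicit. Unset Printing Implicit Defensive.
Import GRing.Theory.
Local Open Scope ring_scope.

Notation CC := (Rdefinitions.R[i]).

(* Minimum of a nonempty set of naturals (0 if empty, which never happens here). *)
Definition natmin (P : nat -> Prop) : nat :=
  match pselect (exists r, P r) with
  | left h => ex_minn (P := fun r => `[< P r >]) (let: ex_intro r Hr := h in
                         ex_intro _ r (asboolT Hr))
  | right _ => 0%N
  end.

Definition blockmx n m (B : 'I_m -> 'I_m -> 'M[CC]_n) :
  'M[CC]_(\sum_(i < m) n) := \mxblock_(i < m, j < m) B i j.

Definition haemers_achievable n (S : {vspace 'M[CC]_n}) (r : nat) : Prop :=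
  exists (m : nat) (B : 'I_m -> 'I_m -> 'M[CC]_n),
    (forall i j, B i j \in S) /\
    \sum_(i < m) B i i = 1%:M /\
    \rank (blockmx B) = r.

Definition haemersS n (S : {vspace 'M[CC]_n}) : nat :=
  natmin (haemers_achievable S).

Definition haemers_graph_achievable n (e : rel 'I_n) (r : nat) : Prop :=
  exists B : 'M[CC]_n,
    (forall i, B i i = 1) /\
    (forall i j, i != j -> ~~ e i j -> B i j = 0) /\
    \rank B = r.

Definition haemersG n (e : rel 'I_n) : nat :=
  natmin (haemers_graph_achievable e).

Definition SG n (e : rel 'I_n) : {vspace 'M[CC]_n} :=
  << [seq delta_mx ij.1 ij.2 | ij <- enum [pred ij : 'I_n * 'I_n |
                                   (ij.1 == ij.2) || e ij.1 ij.2]] >>%VS.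

(* Main.v *)
Require Import Defs.
From mathcomp Require Import all_boot all_algebra.
From mathcomp Require Import complex Rstruct boolp.
From Stdlib Require Import Reals.
Set Implicit Arguments. Unset Strict Implicit. Unset Printing Implicit Defensive.
Import GRing.Theory.
Local Open Scope ring_scope.

Lemma natmin_eq (P Q : nat -> Prop) :
  (forall r, P r -> exists2 r', Q r' & leq r' r) ->
  (forall r, Q r -> exists2 r', P r' & leq r' r) -> natmin P = natmin Q.
Proof.
move=> PQ QP; rewrite /natmin.
case: pselect => [hP|nP]; case: pselect => [hQ|nQ].
- case: ex_minnP => a /asboolP Pa mina; case: ex_minnP => b /asboolP Qb minb.
  apply/eqP; rewrite eqn_leq; apply/andP; split.
    have [r' Pr' le] := QP _ Qb; exact: leq_trans (mina _ (asboolT Pr')) le.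
  have [r' Qr' le] := PQ _ Pa; exact: leq_trans (minb _ (asboolT Qr')) le.
- by exfalso; case: hP => r /PQ [r' ? _]; apply: nQ; exists r'.
- by exfalso; case: hQ => r /QP [r' ? _]; apply: nP; exists r'.
- by [].
Qed.

Lemma mxsub_mul (m n m' n' : nat) (f : 'I_m' -> 'I_m) (g : 'I_n' -> 'I_n)
  (A : 'M[CC]_(m,n)) :
  mxsub f g A = (\matrix_(i,k) (f i == k)%:R) *m A *m (\matrix_(k,j) (g j == k)%:R).
Proof.
apply/matrixP => i j; rewrite !mxE (bigD1 (g j)) //= big1 => [|k /negbTE nk].
  rewrite !mxE eqxx mulr1 addr0 (bigD1 (f i)) //= big1 => [|k /negbTE nk].
    by rewrite !mxE eqxx mul1r addr0.
  by rewrite !mxE eq_sym nk mul0r.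
by rewrite !mxE eq_sym nk mulr0.
Qed.

Lemma rank_mxsub (m n m' n' : nat) (f : 'I_m' -> 'I_m) (g : 'I_n' -> 'I_n)
  (A : 'M[CC]_(m,n)) : leq (\rank (mxsub f g A)) (\rank A).
Proof.
rewrite mxsub_mul; apply: leq_trans (mxrankM_maxl _ _) _; exact: mxrankM_maxr.
Qed.
Lemma SG_zero n (e : rel 'I_n) (A : 'M[CC]_n) k l :
  A \in SG e -> k != l -> ~~ e k l -> A k l = 0.
Proof.
move=> /coord_span -> nkl nekl; rewrite summxE big1 // => i _.
rewrite mxE /=.
have ltis : leq (nat_of_ord i).+1 (size (enum [pred ij : 'I_n * 'I_n | (ij.1 == ij.2) || e ij.1 ij.2])).
  by rewrite -cardE ltn_ord.
rewrite (nth_map (k, l)) // mxE.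
have := mem_nth (k, l) ltis; rewrite mem_enum /= => h.
case: (nth (k, l) _ i) h => a b /= h.
case: eqP => [ak|]; last by rewrite mulr0.
case: eqP => [bl|]; last by rewrite mulr0.
by move: h; rewrite -ak -bl inE /= (negbTE nkl) (negbTE nekl).
Qed.

Lemma SG_delta n (e : rel 'I_n) k l :
  (k == l) || e k l -> delta_mx k l \in SG e.
Proof.
move=> h; apply: memv_span; apply/mapP; exists (k, l) => //.
by rewrite mem_enum.
Qed.
Definition s1 m n (s : 'I_(\sum_(i < m) n)) : 'I_m := @order.tagnat.sig1 m (fun _ => n) s.
Definition s2 m n (s : 'I_(\sum_(i < m) n)) : 'I_n := @order.tagnat.sig2 m (fun _ => n) s.
Definition rk m n (i : 'I_m) (k : 'I_n) : 'I_(\sum_(i < m) n) := @order.tagnat.Rank m (fun _ => n) i k.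

Lemma blockmxE m n (B : 'I_m -> 'I_m -> 'M[CC]_n) s t :
  blockmx B s t = B (s1 s) (s1 t) (s2 s) (s2 t).
Proof. by rewrite /blockmx /mxblock mxE. Qed.

Lemma blockmx_rk m n (B : 'I_m -> 'I_m -> 'M[CC]_n) i j k l :
  blockmx B (rk i k) (rk j l) = B i j k l.
Proof.
have := mxblockK (fun i j => B i j) i j.
by move/matrixP => /(_ k l); rewrite mxE.
Qed.
Lemma graph_to_S n (e : rel 'I_n) r : haemers_graph_achievable e r ->
  exists2 r', haemers_achievable (SG e) r' & leq r' r.
Proof.
move=> [B [Bd [Bz <-]]].
pose C := fun k l : 'I_n => B k l *: delta_mx k l.
exists (\rank (blockmx C)).
  exists n, C; split; last split => //.
  - move=> k l; rewrite /C; case h: ((k == l) || e k l).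
      by apply: memvZ; apply: SG_delta.
    move/negbT: h; rewrite negb_or => /andP [h1 h2].
    by rewrite Bz // scale0r mem0v.
  - rewrite [RHS]mx1_sum_delta; apply: eq_bigr => k _.
    by rewrite /C Bd scale1r.
pose P : 'M[CC]_(\sum_(i < n) n, n) :=
  \matrix_(s, k) ((s2 s == k) && (s1 s == k))%:R.
pose Q : 'M[CC]_(n, \sum_(i < n) n) :=
  \matrix_(k, t) ((s2 t == k) && (s1 t == k))%:R.
suff -> : blockmx C = P *m B *m Q.
  by apply: leq_trans (mxrankM_maxl _ _) _; exact: mxrankM_maxr.
apply/matrixP => s t; rewrite blockmxE !mxE.
rewrite (bigD1 (s1 t)) //= [X in _ = _ + X]big1 => [|l /negbTE nl]; last first.
  by rewrite [Q _ _]mxE (eq_sym (s1 t)) nl andbF mulr0.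
rewrite addr0 [Q _ _]mxE eqxx andbT mxE.
rewrite (bigD1 (s1 s)) //= [X in (_ + X) * _]big1 => [|l /negbTE nl]; last first.
  by rewrite mxE (eq_sym (s1 s)) nl andbF mul0r.
rewrite mxE eqxx andbT addr0.
by case: (s2 s == s1 s); case: (s2 t == s1 t); rewrite /= ?mulr0 ?mul0r ?mulr1 ?mul1r.
Qed.
Lemma S_to_graph n (e : rel 'I_n) r : haemers_achievable (SG e) r ->
  exists2 r', haemers_graph_achievable e r' & leq r' r.
Proof.
move=> [m [B [BS [Bsum <-]]]].
have : forall k : 'I_n, exists i : 'I_m, B i i k k != 0.
  move=> k; have := congr1 (fun M : 'M[CC]_n => M k k) Bsum.
  rewrite /= summxE mxE eqxx => h.
  case: (pickP (fun i => B i i k k != 0)) => [i hi|none]; first by exists i.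
  exfalso; move: h; rewrite big1 => [|i _].
    by move/eqP; rewrite eq_sym oner_eq0.
  by apply/eqP; rewrite -[_ == 0]negbK none.
case/fin_all_exists => f hf.
pose g k := rk (f k) k.
pose A := mxsub g g (blockmx B).
have AE : forall k l, A k l = B (f k) (f l) k l.
  by move=> k l; rewrite mxE blockmx_rk.
pose D : 'M[CC]_n := \matrix_(k, l) ((k == l)%:R / A k k).
have ME : forall k l, (D *m A) k l = A k l / A k k.
  move=> k l; rewrite mxE (bigD1 k) //= big1 => [|j /negbTE nj].
    by rewrite mxE eqxx addr0 mul1r mulrC.
  by rewrite mxE (eq_sym k) nj mul0r mul0r.
exists (\rank (D *m A)).
  exists (D *m A); split; last split => //.
    by move=> k; rewrite ME divff // AE.
  move=> k l nkl nekl; rewrite ME AE (SG_zero (BS _ _) nkl nekl) mul0r //.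
by apply: leq_trans (mxrankM_maxr _ _) _; apply: rank_mxsub.
Qed.

Theorem mainTheorem1 (n : nat) (e : rel 'I_n)
  (e_sym : symmetric e) (e_irr : irreflexive e) :
  haemersS (SG e) = haemersG e.
Proof.
rewrite /haemersS /haemersG; apply: natmin_eq.
  exact: S_to_graph.
exact: graph_to_S.
Qed.
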